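(* A finite group is pseudo-nilpotent if and only if it is nilpotent.
   Context: For a semigroup $S$, $S^1$ denotes $S$ with an identity adjoined (if $S$ has none). For $x,y\in S$ and $z_1,z_2,\ldots\in S^1$ define recursively $\lambda_0=x$, $\rho_0=y$, $\lambda_{n+1}=\lambda_n z_{n+1}\rho_n$, $\rho_{n+1}=\rho_n z_{n+1}\lambda_n$; write $\lambda_n(x,y,z_1,\ldots,z_n)$ and $\rho_n(x,y,z_1,\ldots,z_n)$. A semigroup $S$ is nilpotent (in the sense of Mal'cev) if there is a positive integer $n$ with $\lambda_n(a,b,c_1,\ldots,c_n)=\rho_n(a,b,c_1,\ldots,c_n)$ for all $a,b\in S$ and $c_1,\ldots,c_n\in S^1$ (for groups this coincides with the usual notion of nilpotency). $\langle X\rangle$ denotes the subsemigroup generated by $X$. The upper non-nilpotent graph $\mathcal{N}_S$ has vertex set $S$, with an edge between $x$ and $y$ iff $\langle x,y\rangle$ is not nilpotent. The empty set is regarded as an ideal; for an ideal $I$ of $S$, $S/I$ is the Rees factor semigroup, with $S/\emptyset=S$. A semigroup $S$ is pseudo-nilpotent if the following holds: whenever $x,y\in S$, $w_1,\ldots,w_m\in S^1$, $T$ is the subsemigroup generated by $x,y$ and those $w_i$ lying in $S$, $I$ is an ideal (possibly empty) of $T$, and $t<m$ are non-negative integers such that, writing $\lambda_k=\lambda_k(x,y,w_1,\ldots,w_k)$ and $\rho_k=\rho_k(x,y,w_1,\ldots,w_k)$, one has $\lambda_t\neq\rho_t$, $(\lambda_t,\rho_t)=(\lambda_m,\rho_m)$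 and $\lambda_m,\rho_m\notin I$, then for every $0\le i\le m$ there is an edge in $\mathcal{N}_{T/I}$ between (the images of) $\lambda_i$ and $\rho_i$. *)

(* Defs.v *)
From mathcomp Require Import all_boot all_fingroup all_solvable.
Set Implicit Arguments. Unset Strict Implicit. Unset Printing Implicit Defensive.

(* multiplication l * c * r where c ranges over S^1: None = adjoined identity *)
Definition mul3 (A : Type) (op : A -> A -> A) (l : A) (c : option A) (r : A) : A :=
  match c with None => op l r | Some z => op (op l z) r end.

(* lr op x y c n = (lambda_n(x,y,c_1..c_n), rho_n(x,y,c_1..c_n)) *)
Fixpoint lr (A : Type) (op : A -> A -> A) (x y : A) (c : nat -> option A) (n : nat)
  : A * A :=
  match n with
  | 0 => (x, y)
  | k.+1 => let p := lr op x y c k in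
            (mul3 op p.1 (c k.+1) p.2, mul3 op p.2 (c k.+1) p.1)
  end.

Inductive gen (A : Type) (op : A -> A -> A) (X : A -> Prop) : A -> Prop :=
  | gen_base a : X a -> gen op X a
  | gen_op a b : gen op X a -> gen op X b -> gen op X (op a b).

Definition malcev_nilpotent (A : Type) (op : A -> A -> A) (U : A -> Prop) : Prop :=
  exists n : nat, 0 < n /\
    forall a b : A, U a -> U b ->
    forall c : nat -> option A, (forall i z, c i = Some z -> U z) ->
      (lr op a b c n).1 = (lr op a b c n).2.

(* Rees factor T/I, modelled in option gT: None is the zero (the class I),
   Some t stands for t in T \ I. *)
Section Rees.
Variable gT : finGroupType.
Definition rees_mul (I : {set gT}) (u v : option gT) : option gT :=
  match u, v with
  | Some a, Some b => if (a * b)%g \in I then None else Some (a * b)%g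
  | _, _ => None
  end.
Definition rees_img (I : {set gT}) (t : gT) : option gT :=
  if t \in I then None else Some t.
End Rees.

Definition rees_edge (gT : finGroupType) (I : {set gT}) (u v : gT) : Prop :=
  ~ malcev_nilpotent (rees_mul I)
      (gen (rees_mul I) (fun z => z = rees_img I u \/ z = rees_img I v)).

(* I is an ideal (possibly empty) of the subsemigroup T *)
Definition is_ideal (gT : finGroupType) (T : gT -> Prop) (I : {set gT}) : Prop :=
  (forall z, z \in I -> T z) /\
  (forall t z, T t -> z \in I -> (t * z)%g \in I /\ (z * t)%g \in I).

(* Pseudo-nilpotency of the group G viewed as a semigroup; since G has an
   identity, G^1 = G, so all w_i lie in G. *)
Definition pseudo_nilpotent (gT : finGroupType) (G : {set gT}) : Prop :=
  forall x y : gT, x \in G -> y \in G ->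
  forall (m : nat) (w : nat -> gT), (forall i, 1 <= i <= m -> w i \in G) ->
  let T := gen (@mulg gT)
             (fun z => z = x \/ z = y \/ exists2 i, 1 <= i <= m & z = w i) in
  let LR := lr (@mulg gT) x y (fun i => Some (w i)) in
  forall I : {set gT}, is_ideal T I ->
  forall t : nat, t < m ->
    (LR t).1 <> (LR t).2 ->
    LR t = LR m ->
    (LR m).1 \notin I -> (LR m).2 \notin I ->
    forall i, i <= m -> rees_edge I (LR i).1 (LR i).2.

(* Main.v *)
Require Import Defs.
From mathcomp Require Import all_boot all_fingroup all_solvable.

Set Implicit Arguments. Unset Strict Implicit.

Section Aux.
Variable A : Type.
Variable op : A -> A -> A.

Lemma lr_shift (x y : A) (c : nat -> option A) n :
  lr op x y c n.+1 =
  lr op (mul3 op x (c 1) y) (mul3 op y (c 1) x) (fun i => c i.+1) n.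
Proof.
elim: n => [|n IH] //.
transitivity (let p := lr op x y c n.+1 in
  (mul3 op p.1 (c n.+2) p.2, mul3 op p.2 (c n.+2) p.1)); first by [].
by rewrite IH.
Qed.

Lemma eq_lr (x y : A) (c c' : nat -> option A) n :
  (forall i, 0 < i -> c i = c' i) -> lr op x y c n = lr op x y c' n.
Proof. by move=> H; elim: n => [|n IH] //=; rewrite IH H. Qed.
End Aux.

Open Scope group_scope.

Section G.
Variable gT : finGroupType.
Variable G : {group gT}.

Definition LRw (x y : gT) (w : nat -> gT) := lr (@mulg gT) x y (fun i => Some (w i)).

Lemma LRw_comm x y w n :
  ((LRw x y w n.+1).2)^-1 * (LRw x y w n.+1).1 =
  [~ ((LRw x y w n).2)^-1 * (LRw x y w n).1, w n.+1 * (LRw x y w n).2].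
Proof.
rewrite /LRw /=; set l := (lr _ _ _ _ n).1; set r := (lr _ _ _ _ n).2.
rewrite commgEl /conjg !invMg !invgK !mulgA.
by rewrite mulgK.
Qed.


Lemma LRw_mem x y w m : x \in G -> y \in G -> (forall i, 1 <= i <= m -> w i \in G) ->
  forall n, n <= m -> (LRw x y w n).1 \in G /\ (LRw x y w n).2 \in G.
Proof.
move=> xG yG wG; elim=> [|n IH] ltn //= .
have [H1 H2] := IH (ltnW ltn).
have wn : w n.+1 \in G by apply: wG; rewrite ltn.
by rewrite /LRw /= !groupM.
Qed.

Lemma nil_no_cycle x y w m t : nilpotent G -> x \in G -> y \in G ->
  (forall i, 1 <= i <= m -> w i \in G) -> t < m ->
  LRw x y w t = LRw x y w m -> (LRw x y w t).1 = (LRw x y w t).2.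
Proof.
move=> nilG xG yG wG ltm eqtm.
pose a n := ((LRw x y w n).2)^-1 * (LRw x y w n).1.
have aG n : n <= m -> a n \in G.
  by move=> /(LRw_mem xG yG wG) [H1 H2]; rewrite groupM ?groupV.
have key k : a t \in 'L_k.+1(G).
  elim: k => [|k IH]; first by rewrite lcn1 aG // ltnW.
  have step j : t + j <= m -> a (t + j) \in 'L_(k + j).+1(G).
    elim: j => [|j IHj]; first by rewrite !addn0.
    move=> le; rewrite !addnS in le *; rewrite /a LRw_comm -/(a (t + j)) lcnSn.
    apply: mem_commg; first by apply: IHj; apply: ltnW.
    have [_ H2] := LRw_mem xG yG wG (ltnW le).
    apply: groupM; [apply: wG; exact: le | exact: H2].
  have := step (m - t); rewrite subnKC ?(ltnW ltm) // => /(_ (leqnn m)) H.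
  have amt : a m = a t by rewrite /a eqtm.
  rewrite amt in H.
  have le2 : k.+2 <= (k + (m - t)).+1 by rewrite ltnS -addn1 leq_add2l subn_gt0.
  exact: (subsetP (lcn_sub_leq G le2)).
have [n Ln] := lcnP _ nilG.
have := key n; rewrite Ln => /set1P a1.
by rewrite -[(LRw x y w t).1](mulKVg (LRw x y w t).2) -/(a t) a1 mulg1.
Qed.


Lemma path_exists k : forall x y, x \in G -> y \in G -> y^-1 * x \notin 'Z_k(G) ->
  exists w : nat -> gT, (forall i, w i \in G) /\
    forall i, i <= k -> (LRw x y w i).1 != (LRw x y w i).2.
Proof.
have neq0 x y n : y^-1 * x \notin 'Z_n(G) -> x != y.
  by apply: contra => /eqP ->; rewrite mulVg group1.
elim: k => [|k IH] x y xG yG nZ.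
  exists (fun _ => 1); split=> [i|]; first exact: group1.
  by case=> // _; apply: neq0 nZ.
have aG : y^-1 * x \in G by rewrite groupM ?groupV.
have : ~~ (commg_set [set y^-1 * x] G \subset 'Z_k(G)).
  apply: contra nZ => sub; rewrite ucnSnR inE aG /=.
  by rewrite /commutator gen_subG.
case/subsetPn => _ /imset2P [u g /set1P -> gG ->] nZk.
pose w1 := g * y^-1.
have w1G : w1 \in G by rewrite groupM ?groupV.
have eq1 : (y * w1 * x)^-1 * (x * w1 * y) = [~ y^-1 * x, g].
  rewrite commgEl /conjg /w1 !invMg !invgK !mulgA.
  by rewrite mulgKV.
have [|w' [w'G w'ne]] := IH (x * w1 * y) (y * w1 * x)
  (groupM (groupM xG w1G) yG) (groupM (groupM yG w1G) xG); first by rewrite eq1.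
exists (fun i => match i with 0 => 1 | 1 => w1 | i'.+1 => w' i' end).
split; first by case=> [|[|i]] //; rewrite group1.
case=> [_|i lei]; first by apply: neq0 nZ.
rewrite /LRw lr_shift /=.
rewrite (@eq_lr _ _ _ _ _ (fun i => Some (w' i))); first exact: w'ne.
by case.
Qed.

End G.

Lemma malcev_cyc (gT : finGroupType) (a : gT) :
  malcev_nilpotent (@rees_mul gT set0)
    (gen (@rees_mul gT set0) (fun z => z = rees_img set0 a \/ z = rees_img set0 1)).
Proof.
have rm p q : rees_mul set0 (Some p) (Some q) = Some (p * q) :> option gT.
  by rewrite /rees_mul in_set0.
have pw z : gen (@rees_mul gT set0)
    (fun z => z = rees_img set0 a \/ z = rees_img set0 1) z -> exists k, z = Some (a ^+ k).
  elim=> [_ [->|->]|u v _ [i ->] _ [j ->]].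
  - by exists 1%N; rewrite /rees_img in_set0 expg1.
  - by exists 0%N; rewrite /rees_img in_set0 expg0.
  by exists (i + j)%N; rewrite rm expgD.
exists 1%N; split => // u v /pw [i ->] /pw [j ->] c cU /=.
case E: (c 1%N) => [z|] /=.
  have [k ->] := pw _ (cU _ _ E).
  by rewrite /rees_mul /= !in_set0 /= -!expgD -addnA addnC (addnC k).
by rewrite /rees_mul /= !in_set0 /= -!expgD addnC.
Qed.

Theorem lemma2p5 (gT : finGroupType) (G : {group gT}) :
  pseudo_nilpotent G <-> nilpotent G.
Proof.
split; last first.
  move=> nilG x y xG yG m w wG T LR I _ t ltm neq eqtm.
  by case: neq; apply: (nil_no_cycle nilG xG yG wG ltm eqtm).
move=> pn; apply/negPn/negP => nnil.
pose N := #|{: gT * gT}|.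
have : ~~ (G \subset 'Z_N(G)).
  apply: contra nnil => sub; apply/ucnP; exists N.
  by apply/eqP; rewrite eqEsubset ucn_sub sub.
case/subsetPn => a aG naZ.
have [|w [wG wne]] := path_exists (k := N) aG (group1 G); first by rewrite invg1 mul1g.
pose f (i : 'I_N.+1) := LRw a 1 w i.
have [|/existsPn H] := boolP [exists i, exists j, (i != j) && (f i == f j)]; last first.
  have inj : injective f.
    move=> i j /eqP fij; apply/eqP; apply/negPn/negP => nij.
    by have := H i; move/existsPn/(_ j); rewrite nij fij.
  by have := leq_card f inj; rewrite card_ord ltnn.
case/existsP => i /existsP [j /andP [nij /eqP fij]].
wlog lt : i j nij fij / i < j.
  move=> W; case: (ltngtP i j) => [l|l|/val_inj e]; first exact: W l.
    by apply: (W j i) => //; rewrite eq_sym.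
  by rewrite e eqxx in nij.
have := pn a 1 aG (group1 G) j w (fun k _ => wG k) set0.
have id0 : is_ideal (gen *%g
       (fun z : gT => z = a \/ z = 1 \/ (exists2 i : nat, 0 < i <= j & z = w i)))
    set0 by split=> [z|t z _]; rewrite in_set0.
have ne : (f i).1 <> (f i).2 by apply/eqP; apply: wne; rewrite -ltnS.
move=> /(_ id0 i lt ne fij).
rewrite !in_set0 => /(_ isT isT 0%N (leq0n _)).
apply; exact: malcev_cyc.
Qed.
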